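(* Let $G$ be a maximal outerplanar graph with at least four vertices. Let $uv$ be an edge on its outer face with $\deg_G(u)>2$ and $\deg_G(v)>2$, let $w=\Delta(uv)$, and let $G_u=G_u(uv)$ and $G_v=G_v(uv)$ be the $uv$-segments. If $\mathrm{mvc}(G)=\mathrm{mvc}(G_u)+\mathrm{mvc}(G_v)-1$, then $$\mathrm{mvc}_u(G)=\mathrm{mvc}_{uw}(G_u)+\mathrm{mvc}(G_v)-1,\quad \mathrm{mvc}_v(G)=\mathrm{mvc}(G_u)+\mathrm{mvc}_{vw}(G_v)-1,$$ $$\mathrm{mvc}_{uv}(G)=\mathrm{mvc}_{uw}(G_u)+\mathrm{mvc}_{vw}(G_v)-1.$$
   Context: All graphs are finite and simple. A maximal outerplanar graph is an outerplanar graph to which no edge between existing vertices can be added while keeping it outerplanar. A fixed outerplanar embedding, with all vertices on the outer face, is assumed. For $S\subseteq V(G)$, $\mathrm{mvc}_S(G)$ is the minimum size of a vertex cover of $G$ containing $S$, and $\mathrm{mvc}(G)=\mathrm{mvc}_\emptyset(G)$. Braces are dropped for small sets, e.g. $\mathrm{mvc}_{uw}(G)=\mathrm{mvc}_{\{u,w\}}(G)$. For an edge $uv$ on the outer face of a maximal outerplanar graph with at least three vertices, $\Delta(uv)$ is the unique common neighbor of $u$ and $v$. $uv$-segments: let $w=\Delta(uv)$. $G_u(uv)$ is the maximal biconnected outerplanar subgraph of $G$ that has $uw$ on its outer face and does not contain $v$. Equivalently, it is the subgraph induced by $u$, $w$ and the vertices on the side of edge $uw$ not containing $v$; it is the single edge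 $uw$ if $\deg_G(u)=2$. $G_v(uv)$ is defined symmetrically. *)

(* Defs.v *)
From mathcomp Require Import all_boot.
Set Implicit Arguments. Unset Strict Implicit. Unset Printing Implicit Defensive.

Definition btw (p q r : nat) : bool :=
  [|| (p < q < r), (q < r < p) | (r < p < q)].

Section Graphs.
Variable T : finType.

Definition simple_graph (e : rel T) : Prop := symmetric e /\ irreflexive e.

(* chords ab and cd of the polygon (vertices placed on a circle in the order
   given by pos) cross *)
Definition crossing (pos : T -> nat) (a b c d : T) : bool :=
  [&& a != c, a != d, b != c, b != d &
      btw (pos a) (pos c) (pos b) != btw (pos a) (pos d) (pos b)].

Definition outerplanar_emb (e : rel T) (pos : T -> nat) : Prop :=
  injective pos /\ forall a b c d, e a b -> e c d -> ~~ crossing pos a b c d.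

Definition outerplanar (e : rel T) : Prop := exists pos, outerplanar_emb e pos.

Definition add_edge (e : rel T) (x y : T) : rel T :=
  fun a b => [|| e a b, (a == x) && (b == y) | (a == y) && (b == x)].

Definition maximal_outerplanar (e : rel T) : Prop :=
  [/\ simple_graph e, outerplanar e &
      forall x y, x != y -> ~~ e x y -> ~ outerplanar (add_edge e x y)].

(* uv is an edge on the outer face of the embedding pos: u, v are consecutive
   on the outer cycle *)
Definition outer_edge (e : rel T) (pos : T -> nat) (u v : T) : bool :=
  e u v && (~~ [exists x, btw (pos u) (pos x) (pos v)]
            || ~~ [exists x, btw (pos v) (pos x) (pos u)]).

Definition deg (e : rel T) (u : T) : nat := #|[set x | e u x]|.

Definition is_cover_in (e : rel T) (A C : {set T}) : bool :=
  [forall x, forall y, [&& x \in A, y \in A & e x y] ==> (x \in C) || (y \in C)].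

(* mvc_S of the subgraph induced by A: minimum size of a vertex cover
   containing S *)
Definition mvc_in (e : rel T) (A S : {set T}) : nat :=
  \big[minn/#|T|]_(C : {set T} | [&& S \subset C, C \subset A & is_cover_in e A C]) #|C|.

(* vertex set of the segment G_u(uv) with w = Delta(uv): u, w and the vertices
   on the side of the chord uw not containing v *)
Definition segment (pos : T -> nat) (u v w : T) : {set T} :=
  [set x | [|| x == u, x == w |
             btw (pos u) (pos x) (pos w) != btw (pos u) (pos v) (pos w)]].

End Graphs.

(* Main.v *)
Require Import Defs.
From mathcomp Require Import all_boot zify.
Ltac ordsolve := rewrite /btw;
  repeat (match goal with |- context[?x < ?y] => case: (ltngtP x y) => ? end; rewrite /=; try done);
  try lia.
Definition O1 p q r a := (~~ btw p a q && ~~ btw p r q) || (~~ btw q a p && ~~ btw q r p).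
Definition O2 p q r a b := (~~ btw p a q && ~~ btw p b q && ~~ btw p r q) || (~~ btw q a p && ~~ btw q b p && ~~ btw q r p).
Definition inU p q r a := btw p a r != btw p q r.
Definition inV p q r a := btw q a r != btw q p r.
Arguments inU : simpl never.
Arguments inV : simpl never.
Arguments O1 : simpl never.
Arguments O2 : simpl never.

Lemma L1 p q r a : p != q -> p != r -> q != r -> a != p -> a != q -> a != r ->
  O1 p q r a -> inU p q r a || inV p q r a.
Proof. rewrite /O1 /inU /inV. ordsolve. Qed.
Lemma L2 p q r a : p != q -> p != r -> q != r -> a != p -> a != q -> a != r ->
  O1 p q r a -> ~~ (inU p q r a && inV p q r a).
Proof. rewrite /O1 /inU /inV. ordsolve. Qed.
Lemma L4 p q r b : p != q -> p != r -> q != r -> b != p -> b != q -> b != r ->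
  O1 p q r b -> ~~ (btw p q b != btw p r b) -> inU p q r b.
Proof. rewrite /O1 /inU /inV. ordsolve. Qed.
Lemma L5 p q r b : p != q -> p != r -> q != r -> b != p -> b != q -> b != r ->
  O1 p q r b -> ~~ (btw q p b != btw q r b) -> inV p q r b.
Proof. rewrite /O1 /inU /inV. ordsolve. Qed.
Lemma L3 p q r a b : p != q -> p != r -> q != r -> a != p -> a != q -> a != r ->
  b != p -> b != q -> b != r -> a != b ->
  O2 p q r a b -> ~~ (btw a p b != btw a r b) -> ~~ (btw a q b != btw a r b) ->
  (inU p q r a && inU p q r b) || (inV p q r a && inV p q r b).
Proof. rewrite /O2 /inU /inV. ordsolve. Qed.

Lemma ar0 (m mu mv x y c : nat) (b : bool) : m + 1 = mu + mv -> c = m -> mu <= x -> mv <= y ->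
  c + b = x + y -> b /\ x = mu /\ y = mv.
Proof. case: b => /=; lia. Qed.
Lemma ar1 (a b m x y : nat) (c : bool) : a <= (~~ c) + x -> b <= y -> m + c = x + y -> a + b <= m + 1.
Proof. case: c => /=; lia. Qed.
Lemma ar3 (Au Bv mu mv xu xv d : nat) (c : bool) : Au <= (~~c) + xu -> Bv <= (~~c) + xv ->
  mu <= xu -> mv <= xv -> d + c = xu + xv -> Au <= mu.+1 -> Bv <= mv.+1 ->
  (Au <= mu) || (Bv <= mv) -> Au + Bv <= d + 1.
Proof. case: c => /=; case: (leqP Au mu); case: (leqP Bv mv) => //=; lia. Qed.
Lemma ar2 (b : bool) x m : x = m -> b + x <= m.+1.
Proof. move=> ->; case: b => //=. Qed.
Arguments ar0 {m mu mv x y c b}.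
Arguments ar1 {a b m x y c}.
Arguments ar3 {Au Bv mu mv xu xv d c}.

Section Abs.
Variables (T : finType) (e : rel T).

Lemma bigmin_le (I : finType) (P : pred I) (F : I -> nat) d j :
  P j -> \big[minn/d]_(i | P i) F i <= F j.
Proof.
move=> Pj; have : j \in index_enum I by rewrite mem_index_enum.
elim: (index_enum I) => // x s IH; rewrite inE big_cons.
case/orP => [/eqP <- | js]; first by rewrite Pj geq_minl.
case: ifP => _; last exact: IH.
exact: leq_trans (geq_minr _ _) (IH js).
Qed.

Definition Pc (A S C : {set T}) := [&& S \subset C, C \subset A & is_cover_in e A C].

Lemma coverP (A C : {set T}) : reflect (forall x y, x \in A -> y \in A -> e x y -> (x \in C) || (y \in C))
  (is_cover_in e A C).
Proof.
apply: (iffP forallP) => [H x y xA yA exy | H x].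
  by move: (forallP (H x) y) => /implyP; apply; rewrite xA yA exy.
by apply/forallP => y; apply/implyP => /and3P [xA yA exy]; exact: H.
Qed.

Lemma mvc_le (A S C : {set T}) : Pc A S C -> mvc_in e A S <= #|C|.
Proof. by move=> PC; rewrite /mvc_in; apply: bigmin_le. Qed.

Lemma mvc_ex (A S : {set T}) : S \subset A -> exists2 C, Pc A S C & mvc_in e A S = #|C|.
Proof.
move=> SA.
have PA : Pc A S A by rewrite /Pc SA subxx /=; apply/coverP => x y ->.
have : mvc_in e A S = #|T| \/ exists2 C, Pc A S C & mvc_in e A S = #|C|.
  rewrite /mvc_in; apply: (big_ind (fun m => m = #|T| \/ exists2 C, Pc A S C & m = #|C|)).
  - by left.
  - by move=> x y Hx Hy; rewrite /minn; case: ifP => _.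
  - by move=> C PC; right; exists C.
case=> [Heq|//]; exists A; first exact: PA.
by apply/eqP; rewrite eqn_leq mvc_le // Heq max_card.
Qed.

Lemma cover_mono (A C C' : {set T}) : C \subset C' -> is_cover_in e A C -> is_cover_in e A C'.
Proof.
move=> /subsetP sC /coverP H; apply/coverP => x y xA yA exy.
by case/orP: (H x y xA yA exy) => [/sC -> | /sC ->] //; rewrite orbT.
Qed.

Lemma cover_restr (A B C : {set T}) : B \subset A -> is_cover_in e A C -> is_cover_in e B (C :&: B).
Proof.
move=> /subsetP sB /coverP H; apply/coverP => x y xB yB exy.
by rewrite !inE xB yB !andbT; apply: H => //; apply: sB.
Qed.

Arguments mvc_le {A S C}.
Arguments mvc_ex {A S}.
Arguments cover_mono {A C C'}.
Arguments cover_restr {A B C}.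

Variables (Gu Gv : {set T}) (u v w : T).
Hypotheses (hUV : forall x, (x \in Gu) || (x \in Gv))
  (hI : forall x, x \in Gu -> x \in Gv -> x = w)
  (huG : u \in Gu) (hwu : w \in Gu) (hvG : v \in Gv) (hwv : w \in Gv)
  (huv : e u v)
  (hE : forall x y, e x y ->
     [|| (x \in Gu) && (y \in Gu), (x \in Gv) && (y \in Gv),
         (x == u) && (y == v) | (x == v) && (y == u)]).

Lemma cover_union (Cu Cv : {set T}) : is_cover_in e Gu Cu -> is_cover_in e Gv Cv ->
  (u \in Cu :|: Cv) || (v \in Cu :|: Cv) -> is_cover_in e setT (Cu :|: Cv).
Proof.
move=> /coverP Hu /coverP Hv Huv; apply/coverP => x y _ _ exy.
case/or4P: (hE x y exy) => [/andP[xG yG]|/andP[xG yG]|/andP[/eqP-> /eqP->]|/andP[/eqP-> /eqP->]].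
- by case/orP: (Hu x y xG yG exy); rewrite !inE => ->; rewrite ?orbT.
- by case/orP: (Hv x y xG yG exy); rewrite !inE => ->; rewrite ?orbT.
- by [].
- by rewrite orbC.
Qed.

Lemma card_w (X C : {set T}) : (forall x, (x \in X) = (x == w) && (w \in C)) -> #|X| = (w \in C).
Proof.
move=> H; case wC: (w \in C).
  have -> : X = [set w] by apply/setP => x; rewrite H inE wC andbT.
  by rewrite cards1.
have -> : X = set0 by apply/setP => x; rewrite H inE wC andbF.
by rewrite cards0.
Qed.

Lemma card_split (C : {set T}) : #|C| + (w \in C) = #|C :&: Gu| + #|C :&: Gv|.
Proof.
rewrite -cardsUI -setIUr.
have -> : Gu :|: Gv = setT by apply/setP => x; rewrite in_setU inE hUV.
rewrite setIT; congr (_ + _); symmetry; apply: card_w => x; rewrite !inE.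
case xw: (x == w); first by move/eqP: xw => ->; rewrite hwu hwv !andbT andbb.
apply/negbTE/negP => /andP[/andP[_ a] /andP[_ b]].
by rewrite (hI x a b) eqxx in xw.
Qed.

Lemma card_union (Cu Cv : {set T}) : Cu \subset Gu -> Cv \subset Gv -> w \in Cu -> w \in Cv ->
  #|Cu :|: Cv| + 1 = #|Cu| + #|Cv|.
Proof.
move=> /subsetP sU /subsetP sV wU wV; rewrite -cardsUI; congr (_ + _).
have -> : #|Cu :&: Cv| = (w \in Cu).
  apply: card_w => x; rewrite !inE wU andbT.
  case xw: (x == w); first by move/eqP: xw => ->; rewrite wU wV.
  apply/negbTE/negP => /andP[a b].
  by rewrite (hI x (sU _ a) (sV _ b)) eqxx in xw.
by rewrite wU.
Qed.

Arguments card_union {Cu Cv}.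

Lemma sub_u (C : {set T}) : u \in C -> C \subset Gu -> w \in C -> [set u; w] \subset C.
Proof. by move=> uC _ wC; rewrite subUset !sub1set uC wC. Qed.

Hypothesis hM : mvc_in e setT set0 + 1 = mvc_in e Gu set0 + mvc_in e Gv set0.

Lemma opt_split : exists Cu, exists Cv,
  [/\ Pc Gu set0 Cu, Pc Gv set0 Cv, (w \in Cu) && (w \in Cv),
      #|Cu| = mvc_in e Gu set0 /\ #|Cv| = mvc_in e Gv set0 & (u \in Cu) || (v \in Cv)].
Proof.
have [C /and3P[_ _ cC] eC] := mvc_ex (sub0set setT).
have sp := card_split C.
have pU : Pc Gu set0 (C :&: Gu) by rewrite /Pc sub0set subsetIr (cover_restr (subsetT Gu) cC).
have pV : Pc Gv set0 (C :&: Gv) by rewrite /Pc sub0set subsetIr (cover_restr (subsetT Gv) cC).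
have [wC [e1 e2]] := ar0 hM (esym eC) (mvc_le pU) (mvc_le pV) sp.
exists (C :&: Gu), (C :&: Gv); split => //; first by rewrite !inE wC hwu hwv.
move/coverP: cC => /(_ u v (in_setT u) (in_setT v) huv).
by rewrite !inE huG hvG !andbT.
Qed.

Lemma claim1 : mvc_in e setT [set u] + 1 = mvc_in e Gu [set u; w] + mvc_in e Gv set0.
Proof.
have [Cu0 [Cv0 [pU0 pV0 /andP[wU0 wV0] [cU0 cV0] _]]] := opt_split.
apply/eqP; rewrite eqn_leq; apply/andP; split.
- have sUw : [set u; w] \subset Gu by rewrite subUset !sub1set huG hwu.
  have [Cu /and3P[sCu CuG cCu] eCu] := mvc_ex sUw.
  move/and3P: pV0 => [_ CvG cCv].
  have uCu : u \in Cu by move/subsetP: sCu; apply; rewrite !inE eqxx.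
  have wCu : w \in Cu by move/subsetP: sCu; apply; rewrite !inE eqxx orbT.
  have pD : Pc setT [set u] (Cu :|: Cv0).
    rewrite /Pc subsetT sub1set inE uCu /=.
    by apply: cover_union => //; rewrite inE uCu.
  by rewrite eCu -cV0 -(card_union CuG CvG wCu wV0) leq_add2r; exact: mvc_le pD.
- have [D /and3P[sD _ cD] eD] := mvc_ex (subsetT [set u]).
  have uD : u \in D by move/subsetP: sD; apply; rewrite inE.
  have sp := card_split D.
  have pV : Pc Gv set0 (D :&: Gv) by rewrite /Pc sub0set subsetIr (cover_restr (subsetT Gv) cD).
  have pU : Pc Gu [set u; w] (w |: (D :&: Gu)).
    rewrite /Pc subUset !sub1set !inE eqxx uD huG !orbT /=.
    rewrite subUset sub1set hwu subsetIr /=.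
    by apply: cover_mono (subsetU1 _ _) (cover_restr (subsetT _) cD).
  have := mvc_le pU; rewrite cardsU1 inE hwu andbT => lU.
  by rewrite eD; apply: ar1 lU (mvc_le pV) sp.
Qed.

Lemma claim3 : mvc_in e setT [set u; v] + 1 = mvc_in e Gu [set u; w] + mvc_in e Gv [set v; w].
Proof.
have [Cu0 [Cv0 [pU0 pV0 /andP[wU0 wV0] [cU0 cV0] uv0]]] := opt_split.
have sUw : [set u; w] \subset Gu by rewrite subUset !sub1set huG hwu.
have sVw : [set v; w] \subset Gv by rewrite subUset !sub1set hvG hwv.
apply/eqP; rewrite eqn_leq; apply/andP; split.
- have [Cu /and3P[sCu CuG cCu] eCu] := mvc_ex sUw.
  have [Cv /and3P[sCv CvG cCv] eCv] := mvc_ex sVw.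
  have uCu : u \in Cu by move/subsetP: sCu; apply; rewrite !inE eqxx.
  have wCu : w \in Cu by move/subsetP: sCu; apply; rewrite !inE eqxx orbT.
  have vCv : v \in Cv by move/subsetP: sCv; apply; rewrite !inE eqxx.
  have wCv : w \in Cv by move/subsetP: sCv; apply; rewrite !inE eqxx orbT.
  have pD : Pc setT [set u; v] (Cu :|: Cv).
    rewrite /Pc subsetT subUset !sub1set !inE uCu vCv orbT /=.
    by apply: cover_union => //; rewrite inE uCu.
  by rewrite eCu eCv -(card_union CuG CvG wCu wCv) leq_add2r; exact: mvc_le pD.
- have [D /and3P[sD _ cD] eD] := mvc_ex (subsetT [set u; v]).
  have uD : u \in D by move/subsetP: sD; apply; rewrite !inE eqxx.
  have vD : v \in D by move/subsetP: sD; apply; rewrite !inE eqxx orbT.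
  have sp := card_split D.
  have pV0' : Pc Gv set0 (D :&: Gv) by rewrite /Pc sub0set subsetIr (cover_restr (subsetT Gv) cD).
  have pU0' : Pc Gu set0 (D :&: Gu) by rewrite /Pc sub0set subsetIr (cover_restr (subsetT Gu) cD).
  have pU : Pc Gu [set u; w] (w |: (D :&: Gu)).
    rewrite /Pc subUset !sub1set !inE eqxx uD huG !orbT /=.
    rewrite subUset sub1set hwu subsetIr /=.
    by apply: cover_mono (subsetU1 _ _) (cover_restr (subsetT _) cD).
  have pV : Pc Gv [set v; w] (w |: (D :&: Gv)).
    rewrite /Pc subUset !sub1set !inE eqxx vD hvG !orbT /=.
    rewrite subUset sub1set hwv subsetIr /=.
    by apply: cover_mono (subsetU1 _ _) (cover_restr (subsetT _) cD).
  move/and3P: (pU0) => [_ Cu0G cCu0]; move/and3P: (pV0) => [_ Cv0G cCv0].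
  have pU1 : Pc Gu [set u; w] (u |: Cu0).
    rewrite /Pc subUset !sub1set !inE eqxx wU0 !orbT /= subUset sub1set huG Cu0G /=.
    exact: cover_mono (subsetU1 _ _) cCu0.
  have pV1 : Pc Gv [set v; w] (v |: Cv0).
    rewrite /Pc subUset !sub1set !inE eqxx wV0 !orbT /= subUset sub1set hvG Cv0G /=.
    exact: cover_mono (subsetU1 _ _) cCv0.
  have lU1 := mvc_le pU1; have lV1 := mvc_le pV1.
  rewrite !cardsU1 in lU1 lV1.
  have hU1 : mvc_in e Gu [set u; w] <= (mvc_in e Gu set0).+1
    by move: lU1 (ar2 (u \notin Cu0) _ _ cU0); apply: leq_trans.
  have hV1 : mvc_in e Gv [set v; w] <= (mvc_in e Gv set0).+1
    by move: lV1 (ar2 (v \notin Cv0) _ _ cV0); apply: leq_trans.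
  have hor : (mvc_in e Gu [set u; w] <= mvc_in e Gu set0) || (mvc_in e Gv [set v; w] <= mvc_in e Gv set0).
    case/orP: uv0 => [uC | vC].
      by move: lU1; rewrite uC /= cU0 => ->.
    by move: lV1; rewrite vC /= cV0 => ->; rewrite orbT.
  have := mvc_le pU; have := mvc_le pV; rewrite !cardsU1 !inE hwu hwv !andbT => lV lU.
  by rewrite eD; apply: ar3 lU lV (mvc_le pU0') (mvc_le pV0') sp hU1 hV1 hor.
Qed.
End Abs.

Theorem lemma2 (T : finType) (e : rel T) (pos : T -> nat) (u v w : T) :
  4 <= #|T| ->
  maximal_outerplanar e ->
  outerplanar_emb e pos ->
  outer_edge e pos u v ->
  2 < deg e u -> 2 < deg e v ->
  e u w -> e v w ->
  let Gu := segment pos u v w in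
  let Gv := segment pos v u w in
  mvc_in e setT set0 + 1 = mvc_in e Gu set0 + mvc_in e Gv set0 ->
  [/\ mvc_in e setT [set u] + 1 = mvc_in e Gu [set u; w] + mvc_in e Gv set0,
      mvc_in e setT [set v] + 1 = mvc_in e Gu set0 + mvc_in e Gv [set v; w] &
      mvc_in e setT [set u; v] + 1 = mvc_in e Gu [set u; w] + mvc_in e Gv [set v; w]].
Proof.
move=> _ [[esym eirr] _ _] [inj Hcr] /andP[euv Hout] _ _ euw evw Gu Gv hM.
have dp : forall x y, (pos x != pos y) = (x != y) by move=> x y; rewrite (inj_eq inj).
have nuv : u != v by apply/eqP => E; move: euv; rewrite E eirr.
have nuw : u != w by apply/eqP => E; move: euw; rewrite E eirr.
have nvw : v != w by apply/eqP => E; move: evw; rewrite E eirr.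
have nvu : v != u by rewrite eq_sym.
have Ho2 : forall x y, O2 (pos u) (pos v) (pos w) (pos x) (pos y).
  by move=> x y; rewrite /O2; case/orP: Hout => /existsPn H; rewrite !H ?orbT.
have Ho1 : forall x, O1 (pos u) (pos v) (pos w) (pos x).
  by move=> x; rewrite /O1; case/orP: Hout => /existsPn H; rewrite !H ?orbT.
have mU x : (x \in Gu) = [|| x == u, x == w | inU (pos u) (pos v) (pos w) (pos x)]
  by rewrite /Gu inE.
have mV x : (x \in Gv) = [|| x == v, x == w | inV (pos u) (pos v) (pos w) (pos x)]
  by rewrite /Gv inE.
have huG : u \in Gu by rewrite mU eqxx.
have hwu : w \in Gu by rewrite mU eqxx orbT.
have hvG : v \in Gv by rewrite mV eqxx.
have hwv : w \in Gv by rewrite mV eqxx orbT.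
have hUV : forall x, (x \in Gu) || (x \in Gv).
  move=> x; rewrite mU mV.
  case xu: (x == u) => //=; case xw: (x == w) => //=; case xv: (x == v); rewrite /= ?orbT //.
  apply: L1; rewrite ?dp ?xu ?xv ?xw ?nuv ?nuw ?nvw //.
have hI : forall x, x \in Gu -> x \in Gv -> x = w.
  move=> x; rewrite mU mV.
  case xw: (x == w); first by move/eqP: xw.
  case xu: (x == u).
    by move/eqP: xu => -> _; rewrite ?(negbTE nuv) ?(negbTE nuw) /inV eqxx.
  case xv: (x == v).
    by move/eqP: xv => ->; rewrite ?(negbTE nvu) ?(negbTE nvw) /inU eqxx.
  rewrite /= => a b.
  have := L2 (pos u) (pos v) (pos w) (pos x).
  by rewrite ?dp ?xu ?xv ?xw ?nuv ?nuw ?nvw a b //= => /(_ isT isT isT isT isT isT (Ho1 x)).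
have hE : forall x y, e x y ->
     [|| (x \in Gu) && (y \in Gu), (x \in Gv) && (y \in Gv),
         (x == u) && (y == v) | (x == v) && (y == u)].
  move=> x y exy.
  case xw: (x == w).
    by move/eqP: xw => ->; rewrite hwu hwv /=; case/orP: (hUV y) => ->; rewrite ?orbT.
  case yw: (y == w).
    by move/eqP: yw => ->; rewrite hwu hwv !andbT; case/orP: (hUV x) => ->; rewrite ?orbT.
  have nxy : x != y by apply/eqP => E; move: exy; rewrite E eirr.
  case xu: (x == u).
    move/eqP: xu => Exu; subst x.
    case yv: (y == v); first by rewrite /= ?orbT.
    case yu: (y == u); first by move/eqP: yu => E; move: exy; rewrite E eirr.
    have yG : y \in Gu.
      rewrite mU yu yw /=; apply: L4; rewrite ?dp ?yu ?yv ?yw ?nuv ?nuw ?nvw //.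
      by move: (Hcr _ _ _ _ exy evw); rewrite /crossing nuv nuw yv yw.
    by rewrite huG yG.
  case xv: (x == v).
    move/eqP: xv => Exv; subst x.
    case yu: (y == u); first by rewrite /= ?orbT.
    case yv: (y == v); first by move/eqP: yv => E; move: exy; rewrite E eirr.
    have yG : y \in Gv.
      rewrite mV yv yw /=; apply: L5; rewrite ?dp ?yu ?yv ?yw ?nuv ?nuw ?nvw //.
      by move: (Hcr _ _ _ _ exy euw); rewrite /crossing nvu nvw yu yw.
    by rewrite hvG yG orbT.
  case yu: (y == u).
    move/eqP: yu => Eyu; subst y.
    have xG : x \in Gu.
      rewrite mU xu xw /=; apply: L4; rewrite ?dp ?xu ?xv ?xw ?nuv ?nuw ?nvw //.
      have eux : e u x by rewrite esym.
      by move: (Hcr _ _ _ _ eux evw); rewrite /crossing nuv nuw xv xw.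
    by rewrite huG xG.
  case yv: (y == v).
    move/eqP: yv => Eyv; subst y.
    have xG : x \in Gv.
      rewrite mV xv xw /=; apply: L5; rewrite ?dp ?xu ?xv ?xw ?nuv ?nuw ?nvw //.
      have evx : e v x by rewrite esym.
      by move: (Hcr _ _ _ _ evx euw); rewrite /crossing nvu nvw xu xw.
    by rewrite hvG xG orbT.
  rewrite !mU !mV xu xw xv yu yw yv /=.
  have c1 := Hcr _ _ _ _ exy euw; have c2 := Hcr _ _ _ _ exy evw.
  rewrite /crossing xu xw xv yu yw yv /= in c1 c2.
  have := L3 (pos u) (pos v) (pos w) (pos x) (pos y).
  rewrite ?dp ?xu ?xv ?xw ?yu ?yv ?yw ?nuv ?nuw ?nvw nxy /=.
  move=> /(_ isT isT isT isT isT isT isT isT isT isT (Ho2 x y) c1 c2).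
  by case/orP => ->; rewrite ?orbT.
split.
- exact: (claim1 _ _ _ _ _ _ _ hUV hI huG hwu hvG hwv euv hE hM).
- rewrite [RHS]addnC.
  have hUV' : forall x, (x \in Gv) || (x \in Gu) by move=> x; rewrite orbC.
  have hI' : forall x, x \in Gv -> x \in Gu -> x = w by move=> x a b; exact: hI.
  have hvu : e v u by rewrite esym.
  have hE' : forall x y, e x y ->
     [|| (x \in Gv) && (y \in Gv), (x \in Gu) && (y \in Gu),
         (x == v) && (y == u) | (x == u) && (y == v)].
    by move=> x y /hE; case/or4P => ->; rewrite ?orbT.
  have hM' : mvc_in e setT set0 + 1 = mvc_in e Gv set0 + mvc_in e Gu set0 by rewrite [RHS]addnC.
  exact: (claim1 _ _ _ _ _ _ _ hUV' hI' hvG hwv huG hwu hvu hE' hM').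
- exact: (claim3 _ _ _ _ _ _ _ hUV hI huG hwu hvG hwv euv hE hM).
Qed.
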